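(* Let $S$ be a Del Pezzo surface with smooth effective anticanonical divisor $E$, let $\beta\in H_2(S,\mathbb{Z})$ be a non-zero effective primitive class, and $w=E\cdot\beta$. Let $\{N_S[dw]\}_{d\ge1}$, $\{I_{K_S}(d\beta)\}_{d\ge1}$ be sequences of rational numbers with $N_S[dw]=(-1)^{dw+1}dw\,I_{K_S}(d\beta)$ for all $d\ge1$, and define rational sequences $\{n_{d\beta}\}$, $\{n_S[dw]\}$ by $$\sum_{l\ge1}I_{K_S}(l\beta)q^l=\sum_{d\ge1}n_{d\beta}\sum_{k\ge1}\frac{1}{k^3}q^{dk},\qquad \sum_{l\ge1}N_S[lw]q^l=\sum_{d\ge1}n_S[dw]\sum_{k\ge1}\frac{1}{k^2}\binom{k(dw-1)-1}{k-1}q^{dk}.$$ Fix a positive integer $N$ and define the $N\times N$ matrix $C$ by: for $1\le s,t\le N$ with $t\mid s$, $$C_{st}=\frac{(-1)^{sw}}{(s/t)^2}\sum_{k\in I(s/t)}(-1)^{\omega(s/(kt))}(-1)^{ktw}\binom{k(tw-1)-1}{k-1},$$ and $C_{st}=0$ if $t\nmid s$. Then $$C\cdot\big[n_S[dw]\big]_{1\le d\le N}=\big[(-1)^{dw+1}\,dw\,n_{d\beta}\big]_{1\le d\le N}$$ (as column vectors). Moreover, $C$ is lower triangular with determinant $1$, and consequently $C$ has integer entries if and only if $C^{-1}$ has integer entries.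
   Context: For a positive integer $n$, $\omega(n)$ is the number of distinct primes dividing $n$, and $I(n)=\{k\in\mathbb{N}: k\mid n \text{ and } n/k \text{ is square-free}\}$. Binomial coefficients $\binom{n}{m}$ with $n\in\mathbb{Z}$, $m\ge0$ mean $n(n-1)\cdots(n-m+1)/m!$. *)

(* Defs.v *)
From HB Require Import structures.
From mathcomp Require Import all_boot all_order all_algebra.
Set Implicit Arguments. Unset Strict Implicit. Unset Printing Implicit Defensive.
Import Order.TTheory GRing.Theory Num.Theory.
Local Open Scope ring_scope.

Definition omega (n : nat) : nat := size (primes n).

Definition squarefree (n : nat) : bool :=
  (0 < n)%N && all (fun p => ~~ (p ^ 2 %| n)%N) (primes n).

Definition Iset (n : nat) : seq nat :=
  [seq k <- divisors n | squarefree (n %/ k)%N].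

Definition binz (n : int) (m : nat) : rat :=
  (\prod_(i < m) (n%:~R - (i : nat)%:R)) / (m`!)%:R.

Definition Centry (w s t : nat) : rat :=
  if (t %| s)%N then
    (-1) ^+ (s * w) / ((s %/ t)%:R ^+ 2) *
    \sum_(k <- Iset (s %/ t)%N)
       (-1) ^+ omega (s %/ (k * t)) * (-1) ^+ (k * t * w) *
       binz ((k : nat)%:Z * ((t * w)%:Z - 1) - 1) k.-1
  else 0.

(* the N x N matrix C, index i : 'I_N corresponds to s = i+1 *)
Definition Cmat (w N : nat) : 'M[rat]_N :=
  \matrix_(i < N, j < N) Centry w i.+1 j.+1.

(* Main.v *)
Require Import Defs.
From HB Require Import structures.
From mathcomp Require Import all_boot all_order all_algebra ring.
Import Order.TTheory GRing.Theory Num.Theory.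
Local Open Scope ring_scope.

Lemma mem_div d n : (0 < n)%N -> (d \in divisors n) = (d %| n)%N.
Proof. by move=> n0; rewrite -dvdn_divisors. Qed.

Lemma sum_div_reindex (G : nat -> rat) s t : (0 < s)%N -> (t %| s)%N ->
  \sum_(k <- divisors (s %/ t)) G k =
  \sum_(d <- divisors s | dvdn t d) G (d %/ t)%N.
Proof.
move=> s0 ts.
have t0 : (0 < t)%N by apply: dvdn_gt0 ts.
have st0 : (0 < s %/ t)%N by rewrite divn_gt0 // dvdn_leq.

have pe : perm_eq [seq t * k | k <- divisors (s %/ t)]%N [seq d <- divisors s | dvdn t d].
  apply: uniq_perm.
  - rewrite map_inj_uniq ?divisors_uniq //; by move=> x y /eqP; rewrite eqn_pmul2l // => /eqP.
  - by rewrite filter_uniq ?divisors_uniq.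
  move=> d; rewrite mem_filter mem_div //; apply/mapP/idP.
    case=> k; rewrite mem_div // => kst ->; rewrite dvdn_mulr //=.
    by rewrite -(divnK ts) mulnC dvdn_pmul2r.
  case/andP=> td ds; exists (d %/ t)%N; last by rewrite mulnC divnK.
  by rewrite mem_div // dvdn_divLR // divnK.
rewrite -[RHS]big_filter -(perm_big _ pe) big_map; apply: eq_bigr => k _.
by rewrite mulKn.
Qed.

Lemma sum_div_exchange (H : nat -> nat -> rat) s : (0 < s)%N ->
  \sum_(d <- divisors s) \sum_(e <- divisors d) H d e =
  \sum_(e <- divisors s) \sum_(d <- divisors s | dvdn e d) H d e.
Proof.
move=> s0.
have E : forall d, (d %| s)%N -> \sum_(e <- divisors d) H d e =
   \sum_(e <- divisors s) (if dvdn e d then H d e else 0).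
  move=> d ds; have d0 : (0 < d)%N by apply: dvdn_gt0 ds.
  rewrite -big_mkcond -big_filter; apply: perm_big; apply: uniq_perm.
  - exact: divisors_uniq.
  - by rewrite filter_uniq ?divisors_uniq.
  move=> e; rewrite mem_filter !mem_div //; case ed: (dvdn e d); rewrite ?andbT //=.
  by rewrite (dvdn_trans ed ds).
rewrite big_seq [LHS](eq_bigr (fun d => \sum_(e <- divisors s) (if dvdn e d then H d e else 0))); last first.
  by move=> d; rewrite mem_div // => /E.
rewrite -big_seq exchange_big; apply: eq_bigr => e _; rewrite [RHS]big_mkcond; done.
Qed.
Definition mu (n : nat) : rat := if squarefree n then (-1) ^+ omega n else 0.

Lemma sqfP n : (0 < n)%N ->
  reflect (forall q, prime q -> ~~ (q ^ 2 %| n)%N) (squarefree n).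
Proof.
move=> n0; rewrite /squarefree n0 /=; apply: (iffP allP).
  move=> H q pq; case qn: (q %| n)%N.
    by apply: H; rewrite mem_primes pq n0 qn.
  by apply/negP => /(dvdn_trans (dvdn_exp2l q (isT : (1 <= 2)%N))); rewrite expn1 qn.
by move=> H q; rewrite mem_primes => /and3P [pq _ _]; apply: H.
Qed.

Lemma sqf_mulp p j : prime p -> ~~ (p %| j)%N -> (0 < j)%N ->
  squarefree (p * j) = squarefree j.
Proof.
move=> pp pj j0; have p0 := prime_gt0 pp.
have pj0 : (0 < p * j)%N by rewrite muln_gt0 p0.
apply/idP/idP => [/(sqfP _ pj0) H | /(sqfP _ j0) H]; [apply/(sqfP _ j0) | apply/(sqfP _ pj0)] => q pq.
  apply: contra (H q pq) => h; exact: dvdn_mull.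
case: (eqVneq q p) => [-> | qp].
  by rewrite expnS expn1 dvdn_pmul2l //.
rewrite Gauss_dvdr ?H //.
by rewrite coprimeXl // prime_coprime // dvdn_prime2.
Qed.

Lemma sqf_mulp0 p j : prime p -> (p %| j)%N -> squarefree (p * j) = false.
Proof.
move=> pp pj; suff: ~~ squarefree (p * j) by move/negbTE.
case: (posnP (p * j)) => [pj0|pj0]; first by rewrite /squarefree pj0.
apply/negP => /(sqfP _ pj0) /(_ p pp).
by rewrite expnS expn1 dvdn_pmul2l ?prime_gt0 // pj.
Qed.

Lemma omega_mulp p j : prime p -> ~~ (p %| j)%N -> (0 < j)%N ->
  omega (p * j) = (omega j).+1.
Proof.
move=> pp pj j0; have p0 := prime_gt0 pp.
rewrite /omega; have -> : (size (primes j)).+1 = size (p :: primes j) by [].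
apply: perm_size; apply: uniq_perm.
- exact: primes_uniq.
- rewrite /= primes_uniq andbT mem_primes; by rewrite (negbTE pj) !andbF.
move=> q; rewrite in_cons !mem_primes muln_gt0 p0 j0 /=.
case: (eqVneq q p) => [-> | qp] /=; first by rewrite pp dvdn_mulr.
case pq: (prime q) => //=; rewrite Euclid_dvdM // dvdn_prime2 //.
by rewrite (negbTE qp).
Qed.

Lemma mu_mulp p j : prime p -> ~~ (p %| j)%N -> (0 < j)%N -> mu (p * j) = - mu j.
Proof.
move=> pp pj j0; rewrite /mu sqf_mulp // omega_mulp //.
by case: (squarefree j); rewrite ?oppr0 // exprS mulN1r.
Qed.

Lemma mu_mulp0 p j : prime p -> (p %| j)%N -> mu (p * j) = 0.
Proof. by move=> pp pj; rewrite /mu sqf_mulp0. Qed.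

Lemma mu1 : mu 1 = 1.
Proof. by []. Qed.

Lemma mobius m : (0 < m)%N -> \sum_(k <- divisors m) mu k = (m == 1%N)%:R.
Proof.
move=> m0; case: (ltngtP m 1) => [|m1|->]; first by rewrite ltnS leqn0 => /eqP e; rewrite e in m0.
  2: by rewrite big_seq1.
set p := pdiv m; have pp : prime p by apply: pdiv_prime.
have pm : (p %| m)%N by apply: pdiv_dvd.
set m' := (m %/ p)%N.
have em : m = (p * m')%N by rewrite mulnC divnK.
have m'0 : (0 < m')%N by move: m0; rewrite em muln_gt0 => /andP[].
rewrite (bigID (fun k => dvdn p k)) /=.
rewrite [X in X + _](eq_bigr (fun k => mu (p * (k %/ p))%N)); last by move=> k pk; rewrite mulnC divnK.
rewrite -(sum_div_reindex (fun j => mu (p * j)%N)) //.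
have -> : \sum_(i <- divisors m | ~~ dvdn p i) mu i =
          \sum_(i <- divisors m' | ~~ dvdn p i) mu i.
  rewrite -big_filter -[RHS]big_filter; apply: perm_big; apply: uniq_perm.
  - by rewrite filter_uniq ?divisors_uniq.
  - by rewrite filter_uniq ?divisors_uniq.
  move=> k; rewrite !mem_filter !mem_div //; case pk: (dvdn p k) => //=.
  rewrite em Gauss_dvdr // coprime_sym prime_coprime //; by rewrite pk.
rewrite -/m' (bigID (fun k => dvdn p k)) /= big1; last first.
  by move=> j pj; rewrite mu_mulp0.
rewrite add0r -big_split /= big_seq_cond big1 // => j /andP[jm pj].
rewrite mu_mulp // ?addNr //; apply: (dvdn_gt0 m'0); by rewrite -mem_div.
Qed.

Lemma mobius' m : (0 < m)%N -> \sum_(k <- divisors m) mu (m %/ k)%N = (m == 1%N)%:R.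
Proof.
move=> m0; rewrite -(mobius _ m0) -(big_map (fun k => (m %/ k)%N) xpredT mu).
apply: perm_big; apply: uniq_perm.
- rewrite map_inj_in_uniq ?divisors_uniq // => x y.
  rewrite !mem_div // => xm ym e.
  have x0 : (0 < x)%N by apply: dvdn_gt0 xm.
  have y0 : (0 < y)%N by apply: dvdn_gt0 ym.
  have : (m %/ y * x = m %/ y * y)%N by rewrite -{1}e !divnK.
  have my0 : (0 < m %/ y)%N by rewrite divn_gt0 // dvdn_leq.
  by move/eqP; rewrite eqn_pmul2l // => /eqP.
- exact: divisors_uniq.
move=> d; rewrite mem_div //; apply/mapP/idP.
  by case=> k; rewrite mem_div // => km ->; apply: dvdn_div.
move=> dm; exists (m %/ d)%N; first by rewrite mem_div // dvdn_div.
by rewrite divnA // mulKn // (dvdn_gt0 m0 dm).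
Qed.

Lemma divn_divn s d t : (0 < s)%N -> (t %| d)%N -> (d %| s)%N ->
  (s %/ t %/ (d %/ t) = s %/ d)%N.
Proof.
move=> s0 td ds.
have d0 : (0 < d)%N by apply: dvdn_gt0 ds.
have t0 : (0 < t)%N by apply: dvdn_gt0 td.
have dt0 : (0 < d %/ t)%N by rewrite divn_gt0 // dvdn_leq.
have -> : (s %/ t = s %/ d * (d %/ t))%N.
  have e : (s = s %/ d * (d %/ t) * t)%N by rewrite -mulnA divnK // divnK.
  by rewrite {1}e mulnK.
by rewrite mulnK.
Qed.

Lemma sgn1 a b : (-1) ^+ (a + b) * (-1) ^+ b.+1 = (-1) ^+ a.+1 :> rat.
Proof.
rewrite -exprD -signr_odd -[RHS]signr_odd; congr (_ ^+ _).
rewrite !oddD /=; by case: (odd a); case: (odd b).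
Qed.

Lemma sgn2 a b : (-1) ^+ a * (-1) ^+ (a + b) = (-1) ^+ b :> rat.
Proof.
rewrite -exprD -signr_odd -[RHS]signr_odd; congr (_ ^+ _).
rewrite !oddD; by case: (odd a); case: (odd b).
Qed.

Definition Bf (w t k : nat) : rat :=
  ((k%:R) ^+ 2)^-1 * binz ((k : nat)%:Z * ((t * w)%:Z - 1) - 1) k.-1.

Definition af (nb : nat -> rat) (w e : nat) : rat :=
  (-1) ^+ (e * w).+1 * (e * w)%:R * nb e.

Lemma centry_eq w s t : (0 < s)%N -> (t %| s)%N ->
  Centry w s t = \sum_(k <- divisors (s %/ t)%N)
     (-1) ^+ (s * w) * mu ((s %/ t) %/ k)%N * (-1) ^+ (k * t * w)
       * ((((s %/ t) %/ k)%N%:R) ^+ 2)^-1 * Bf w t k.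
Proof.
move=> s0 ts.
have t0 : (0 < t)%N by apply: dvdn_gt0 ts.
have m0 : (0 < s %/ t)%N by rewrite divn_gt0 // dvdn_leq.
rewrite /Centry ts /Iset big_filter big_mkcond mulr_sumr big_seq [RHS]big_seq.
apply: eq_bigr => k; rewrite mem_div // => km.
rewrite /mu [(k * t)%N]mulnC divnMA.
case: (squarefree _); last by rewrite !mulr0 !mul0r.
rewrite /Bf -{1}(divnK km) natrM exprMn invfM; ring.
Qed.

Lemma NS_eq (w : nat) (NS I nb : nat -> rat)
  (hNI : forall d, (0 < d)%N -> NS d = (-1) ^+ (d * w).+1 * (d * w)%:R * I d)
  (hI : forall l, (0 < l)%N -> I l = \sum_(d <- divisors l) nb d / ((l %/ d)%N%:R ^+ 3))
  d : (0 < d)%N ->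
  NS d = \sum_(e <- divisors d)
     (-1) ^+ (d * w + e * w) * ((((d %/ e)%N)%:R) ^+ 2)^-1 * af nb w e.
Proof.
move=> d0; rewrite hNI // hI // mulr_sumr big_seq [RHS]big_seq.
apply: eq_bigr => e; rewrite mem_div // => ed.
set q := (d %/ e)%N.
have q0 : (0 < q)%N by rewrite divn_gt0 ?(dvdn_gt0 d0) // dvdn_leq.
have dq : (d * w = q * (e * w))%N by rewrite mulnA divnK.
rewrite /af -(sgn1 (d * w) (e * w)) [X in X%:R]dq natrM.
set x := (-1) ^+ (d * w + e * w); set y := (-1) ^+ (e * w).+1.
have qn : (q%:R : rat) != 0 by rewrite pnatr_eq0 -lt0n.
field; exact: qn.
Qed.

Lemma divn_mul s d e : (0 < s)%N -> (e %| d)%N -> (d %| s)%N ->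
  (s %/ e = s %/ d * (d %/ e))%N.
Proof.
move=> s0 ed ds; have e0 : (0 < e)%N by apply: dvdn_gt0 ed; apply: dvdn_gt0 ds.
have h : (s = s %/ d * (d %/ e) * e)%N by rewrite -mulnA divnK // divnK.
by rewrite {1}h mulnK.
Qed.

Lemma main_id (w : nat) (NS I nb nS : nat -> rat)
  (hNI : forall d, (0 < d)%N ->
     NS d = (-1) ^+ (d * w).+1 * (d * w)%:R * I d)
  (hI : forall l, (0 < l)%N ->
     I l = \sum_(d <- divisors l) nb d / ((l %/ d)%:R ^+ 3))
  (hN : forall l, (0 < l)%N ->
     NS l = \sum_(d <- divisors l)
              nS d * ((l %/ d)%:R ^+ 2)^-1 *
              binz (((l %/ d)%N : nat)%:Z * ((d * w)%:Z - 1) - 1) (l %/ d).-1)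
  s : (0 < s)%N ->
  \sum_(t <- divisors s) Centry w s t * nS t = af nb w s.
Proof.
move=> s0.
rewrite big_seq (eq_bigr (fun t => \sum_(d <- divisors s | dvdn t d)
   ((-1) ^+ (s * w) * mu (s %/ d)%N * (-1) ^+ (d * w) * (((s %/ d)%N%:R) ^+ 2)^-1
     * (nS t * Bf w t (d %/ t)%N)))); last first.
  move=> t; rewrite mem_div // => ts.
  rewrite centry_eq // mulr_suml sum_div_reindex //.
  rewrite big_seq_cond [RHS]big_seq_cond; apply: eq_bigr => d /andP[].
  rewrite mem_div // => ds td.
  rewrite divn_divn // divnK //; ring.
rewrite -big_seq -sum_div_exchange //.
rewrite big_seq (eq_bigr (fun d => \sum_(e <- divisors d)
   ((-1) ^+ (s * w) * mu (s %/ d)%N * (-1) ^+ (d * w) * (((s %/ d)%N%:R) ^+ 2)^-1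
     * ((-1) ^+ (d * w + e * w) * ((((d %/ e)%N)%:R) ^+ 2)^-1 * af nb w e)))); last first.
  move=> d; rewrite mem_div // => ds; have d0 : (0 < d)%N by apply: dvdn_gt0 ds.
  rewrite -!mulr_sumr; congr (_ * _).
  rewrite -(@NS_eq w NS I nb hNI hI d d0) hN //; apply: eq_bigr => t _; by rewrite /Bf mulrA.
rewrite -big_seq sum_div_exchange //.
rewrite big_seq (eq_bigr (fun e => (-1) ^+ (s * w) * (-1) ^+ (e * w)
     * ((((s %/ e)%N)%:R) ^+ 2)^-1 * af nb w e
     * \sum_(k <- divisors (s %/ e)%N) mu ((s %/ e) %/ k)%N)); last first.
  move=> e; rewrite mem_div // => es.
  rewrite sum_div_reindex // mulr_sumr big_seq_cond [RHS]big_seq_cond.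
  apply: eq_bigr => d /andP[]; rewrite mem_div // => ds ed.
  rewrite divn_divn // [in RHS](divn_mul _ _ _ s0 ed ds) [in RHS]natrM [in RHS]exprMn [in RHS]invfM.
  rewrite -(sgn2 (d * w) (e * w)); ring.
rewrite -big_seq (bigD1_seq s) ?divisors_uniq ?divisors_id //=.
rewrite divnn s0 mobius' // eqxx mulr1 [X in _ + X]big_seq_cond [X in _ + X]big1 ?addr0.
  by rewrite expr1n invr1 mulr1 -exprD -signr_odd oddD addbb mul1r.
move=> e /andP[]; rewrite mem_div // => es nes.
have se0 : (0 < s %/ e)%N by rewrite divn_gt0 ?(dvdn_gt0 s0 es) // dvdn_leq.
rewrite mobius' //.
have -> : (s %/ e == 1)%N = false.
  by apply/negbTE; apply: contra nes => /eqP h; rewrite -{1}(divnK es) h mul1n.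
by rewrite mulr0.
Qed.

Lemma centry_diag w s : (0 < s)%N -> Centry w s s = 1.
Proof.
move=> s0; have I1 : Iset 1 = [:: 1%N] by [].
rewrite /Centry dvdnn divnn s0 /= I1 big_seq1 mul1n divnn s0.
have -> : omega 1 = 0%N by [].
rewrite /binz big_ord0 expr0 mul1r /= expr1n invr1 mulr1.
by rewrite -exprD -signr_odd oddD addbb.
Qed.

Lemma det_int n (B : 'M[rat]_n) : (forall i j, B i j \is a Num.int) -> \det B \is a Num.int.
Proof.
move=> H; rewrite /determinant rpred_sum // => p _.
by rewrite rpredM ?rpredX ?rpredN ?rpred1 // rpred_prod.
Qed.

Lemma inv_int n (A : 'M[rat]_n) : \det A = 1 ->
  (forall i j, A i j \is a Num.int) -> forall i j, invmx A i j \is a Num.int.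
Proof.
move=> dA H i j; rewrite /invmx unitmxE dA unitr1 invr1 scale1r mxE /cofactor.
rewrite rpredM ?rpredX ?rpredN ?rpred1 // det_int // => k l.
by rewrite !mxE.
Qed.

Lemma row_sum w N (nS : nat -> rat) (i : 'I_N) :
  \sum_(j < N) Cmat w N i j * nS j.+1 =
  \sum_(t <- divisors i.+1) Centry w i.+1 t * nS t.
Proof.
set s := i.+1; have s0 : (0 < s)%N by [].
pose F t := if dvdn t s then Centry w s t * nS t else 0.
rewrite (eq_bigr (fun j : 'I_N => F j.+1)); last first.
  move=> j _; rewrite /F mxE; case: ifP => // h.
  by rewrite /Centry h mul0r.
have -> : \sum_(j < N) F j.+1 = \sum_(t < N.+1) F t.
  by rewrite big_ord_recl /F dvd0n /= add0r.
rewrite /F -big_mkcond -(big_mkord (fun t => dvdn t s) (fun t => Centry w s t * nS t)).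
rewrite -big_filter; apply: perm_big; apply: uniq_perm.
- by rewrite filter_uniq // iota_uniq.
- exact: divisors_uniq.
move=> t; rewrite mem_filter mem_index_iota mem_div //.
case ts: (dvdn t s) => //=.
by rewrite ltnS (leq_trans (dvdn_leq s0 ts) (ltn_ord i)).
Qed.

Theorem lemma2p1 (w : nat) (hw : (0 < w)%N)
  (NS I nb nS : nat -> rat)
  (hNI : forall d, (0 < d)%N ->
     NS d = (-1) ^+ (d * w).+1 * (d * w)%:R * I d)
  (hI : forall l, (0 < l)%N ->
     I l = \sum_(d <- divisors l) nb d / ((l %/ d)%:R ^+ 3))
  (hN : forall l, (0 < l)%N ->
     NS l = \sum_(d <- divisors l)
              nS d * ((l %/ d)%:R ^+ 2)^-1 *
              binz (((l %/ d)%N : nat)%:Z * ((d * w)%:Z - 1) - 1) (l %/ d).-1)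
  (N : nat) (hN0 : (0 < N)%N) :
  (forall i : 'I_N,
     \sum_(j < N) Cmat w N i j * nS j.+1
       = (-1) ^+ (i.+1 * w).+1 * (i.+1 * w)%:R * nb i.+1)
  /\ (forall i j : 'I_N, (i < j)%N -> Cmat w N i j = 0)
  /\ \det (Cmat w N) = 1
  /\ ((forall i j, Cmat w N i j \is a Num.int) <->
      (forall i j, invmx (Cmat w N) i j \is a Num.int)).
Proof.
have trig : forall i j : 'I_N, (i < j)%N -> Cmat w N i j = 0.
  by move=> i j ij; rewrite mxE /Centry gtnNdvd.
have det1 : \det (Cmat w N) = 1.
  rewrite det_trig; last by apply/is_trig_mxP => i j; apply: trig.
  by rewrite big1 // => i _; rewrite mxE centry_diag.
split; first by move=> i; rewrite row_sum (@main_id w NS I nb nS hNI hI hN).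
split; first exact: trig.
split; first exact: det1.
split; first exact: inv_int.
move=> H; rewrite -(invmxK (Cmat w N)); apply: inv_int => //.
by rewrite det_inv det1 invr1.
Qed.
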